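(* Let $(\mathbf X,\mathbf Y)$ be a general correlated source which is uniformly integrable. Then \[\limsup_{n\to\infty}\frac1n H(X^n|Y^n)\le\overline H_s(\mathbf X|\mathbf Y)\le\overline H(\mathbf X|\mathbf Y).\]
   Context: A general correlated source $(\mathbf X,\mathbf Y)=\{(X^n,Y^n)\}_{n\ge1}$ is an arbitrary sequence of pairs of random variables on $\mathcal X^n\times\mathcal Y^n$, $\mathcal X,\mathcal Y$ finite or countably infinite (no structural assumptions; marginal probabilities positive). Logs base 2. $H(X^n|Y^n)$ is the conditional entropy. The source is uniformly integrable if $Z_n=\frac1n\log\frac1{P_{X^n|Y^n}(X^n|Y^n)}$ satisfies $\lim_{u\to\infty}\sup_n\sum_{z:|z|\ge u}P_{Z_n}(z)|z|=0$. $\overline H(\mathbf X|\mathbf Y)=\inf\{\alpha:\lim_n\Pr\{\frac1n\log\frac1{P_{X^n|Y^n}(X^n|Y^n)}>\alpha\}=0\}$. For $x^n$ and $\varepsilon\in(0,1]$, $\overline h^\varepsilon(x^n)=\inf\{a\in\mathbb R:\sum_{y^n:\log(1/P_{X^n|Y^n}(x^n|y^n))>a}P_{Y^n|X^n}(y^n|x^n)\le\varepsilon\}$; $\overline H_s^\varepsilon(X^n|Y^n)=\sum_{x^n}P_{X^n}(x^n)\overline h^\varepsilon(x^n)$; $\overline H_s(\mathbf X|\mathbf Y)=\lim_{\varepsilon\downarrow0}\limsup_n\frac1n\overline H_s^\varepsilon(X^n|Y^n)$. *)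

(* Defs.v *)
From HB Require Import structures.
From mathcomp Require Import all_boot all_order all_algebra.
From mathcomp Require Import all_classical all_reals all_analysis.
Set Implicit Arguments.
Unset Strict Implicit.
Unset Printing Implicit Defensive.
Import Order.TTheory GRing.Theory Num.Theory.
Import numFieldNormedType.Exports.
Local Open Scope classical_set_scope.
Local Open Scope ring_scope.

Section Source.
Variables (R : realType) (X Y : countType).
(* A general correlated source: for each n, the joint pmf of (X^n, Y^n)
   on X^n x Y^n (the component n = 0 is irrelevant). *)
Variable P : forall n : nat, n.-tuple X * n.-tuple Y -> R.

Definition log2 (x : R) : R := ln x / ln 2.

Definition is_source : Prop :=
  forall n, (forall p, 0 <= @P n p) /\
            \esum_(p in [set: n.-tuple X * n.-tuple Y]) (@P n p)%:E = 1%E.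

Definition PX n (x : n.-tuple X) : R :=
  fine (\esum_(y in [set: n.-tuple Y]) (@P n (x, y))%:E).
Definition PY n (y : n.-tuple Y) : R :=
  fine (\esum_(x in [set: n.-tuple X]) (@P n (x, y))%:E).

Definition marginals_positive : Prop :=
  forall n : nat, (forall x : n.-tuple X, 0 < PX x) /\ (forall y : n.-tuple Y, 0 < PY y).

Definition PXgY n (x : n.-tuple X) (y : n.-tuple Y) : R := @P n (x, y) / PY y.
Definition PYgX n (y : n.-tuple Y) (x : n.-tuple X) : R := @P n (x, y) / PX x.

Definition Zfun n (p : n.-tuple X * n.-tuple Y) : R :=
  n%:R^-1 * log2 (1 / PXgY p.1 p.2).

Definition PZ n (z : R) : \bar R :=
  \esum_(p in [set p | Zfun p = z]) (@P n p)%:E.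

Definition uniformly_integrable : Prop :=
  (fun u : R => ereal_sup
     [set \esum_(z in [set z : R | u <= `|z|]) (PZ n z * (`|z|)%:E)%E
     | n in [set n : nat | (0 < n)%N]]) @ +oo --> 0%E.

Definition condH n : \bar R :=
  \esum_(p in [set: n.-tuple X * n.-tuple Y])
     (@P n p * log2 (1 / PXgY p.1 p.2))%:E.

Definition Hbar : \bar R :=
  ereal_inf [set a%:E | a in [set a : R |
     (fun n => \esum_(p in [set p | a < Zfun p]) (@P n p)%:E) @ \oo --> 0%E]].

Definition hbar_eps n (eps : R) (x : n.-tuple X) : \bar R :=
  ereal_inf [set a%:E | a in [set a : R |
     (\esum_(y in [set y | (a < log2 (1 / PXgY x y))%R]) (PYgX y x)%:E
        <= eps%:E)%E]].

Definition Hs_eps n (eps : R) : \bar R :=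
  \esum_(x in [set: n.-tuple X]) ((PX x)%:E * hbar_eps eps x)%E.

Definition Hs : \bar R :=
  lim ((limn_esup (fun n => (n%:R^-1)%:E * Hs_eps n eps)%E) @[eps --> 0^'+]).

End Source.

(* Main.v *)
Require Import Defs.
From HB Require Import structures.
From mathcomp Require Import all_boot all_order all_algebra.
From mathcomp Require Import all_classical all_reals all_analysis.
From mathcomp.algebra_tactics Require Import ring lra.
Import Order.TTheory GRing.Theory Num.Theory.
Import numFieldNormedType.Exports.
Local Open Scope classical_set_scope.
Local Open Scope ring_scope.

Module Aux.
Set Implicit Arguments.
Unset Strict Implicit.
Unset Printing Implicit Defensive.
Section GenS.
Local Open Scope ereal_scope.


Context {R : realType}.

Lemma esum_sub (T : choiceType) (A B : set T) (a : T -> \bar R) :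
  A `<=` B -> (forall x, B x -> 0 <= a x) ->
  \esum_(i in A) a i <= \esum_(i in B) a i.
Proof.
move=> AB a0; rewrite esum_mkcond [X in _ <= X]esum_mkcond.
apply: le_esum => i _; case: ifPn => iA.
  by rewrite ifT // inE; apply: AB; rewrite -inE.
by case: ifPn => // /[!inE] /a0.
Qed.

Lemma esumZl (T : choiceType) (S : set T) (a : T -> \bar R) (c : R) :
  (0 <= c)%R -> (forall x, S x -> 0 <= a x) ->
  \esum_(i in S) (c%:E * a i) = c%:E * \esum_(i in S) a i.
Proof.
move=> c0 a0; have [c_gt0|] := ltP 0%R c; last first.
  move=> cle; have -> : c = 0%R by apply/eqP; rewrite eq_le cle c0.
  by rewrite mul0e esum1 // => i _; rewrite mul0e.
rewrite [in LHS]/esum [in RHS]/esum.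
transitivity (ereal_sup [set c%:E * x | x in
    [set \sum_(x \in A) a x | A in fsets S]]); last exact: ereal_sup_pZl.
congr ereal_sup.
apply/seteqP; split.
  move=> _ [A [finA AS] <-].
  exists (\sum_(x \in A) a x); first by exists A.
  rewrite !fsbig_finite //= big_seq [in RHS]big_seq ge0_sume_distrr //.
  by move=> i; rewrite in_fset_set // inE => /AS/a0.
move=> _ [_ [A [finA AS] <-] <-].
exists A => //.
rewrite !fsbig_finite //= big_seq [in RHS]big_seq ge0_sume_distrr //.
by move=> i; rewrite in_fset_set // inE => /AS/a0.
Qed.

Lemma esum_pair (T1 T2 : choiceType) (g : T1 * T2 -> \bar R) :
  (forall p, 0 <= g p) ->
  \esum_(p in [set: T1 * T2]) g p =
  \esum_(x in [set: T1]) \esum_(y in [set: T2]) g (x, y).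
Proof.
move=> g0; rewrite (esum_esum (a := fun x y => g (x, y))) //.
have -> : [set: T1] `*`` (fun=> [set: T2]) = [set: T1 * T2].
  by apply/seteqP; split => // -[x y].
by apply: eq_esum => -[x y].
Qed.

Lemma limn_esup_le (u : nat -> \bar R) (l : \bar R) :
  (\forall n \near \oo, u n <= l) -> limn_esup u <= l.
Proof.
move=> [N _ HN]; rewrite /limn_esup /limf_esup.
apply: (@le_trans _ _ (ereal_sup (u @` [set n | (N <= n)%N]))).
  by apply: ereal_inf_lbound; exists [set n | (N <= n)%N]=> //; exists N.
by apply: ge_ereal_sup => _ [n /= Nn <-]; apply: HN.
Qed.

Lemma limn_esup_lt (u : nat -> \bar R) (l : \bar R) :
  limn_esup u < l -> \forall n \near \oo, u n < l.
Proof.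
rewrite /limn_esup /limf_esup => /ereal_inf_lt [_ [V FV <-]] supl.
apply: filterS FV => n Vn; apply: le_lt_trans supl.
by apply: ereal_sup_ubound; exists n.
Qed.


Lemma esum_split_set (T1 T2 : choiceType) (C : T1 * T2 -> Prop)
  (g : T1 * T2 -> \bar R) : (forall p, 0 <= g p) ->
  \esum_(p in [set p | C p]) g p =
  \esum_(x in [set: T1]) \esum_(y in [set y | C (x, y)]) g (x, y).
Proof.
move=> g0; rewrite esum_mkcond esum_pair; last by move=> p; case: ifP.
apply: eq_esum => x _; rewrite [RHS]esum_mkcond; apply: eq_esum => y _.
by case: (pselect (C (x, y))) => H; [rewrite !mem_set|rewrite !memNset].
Qed.

Lemma esum_cond (T : choiceType) (b : bool) (g : T -> \bar R) :
  \esum_(y in [set y | b]) g y = if b then \esum_(y in [set: T]) g y else 0.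
Proof.
case: b; first by congr esum; apply/seteqP; split.
by rewrite esum1.
Qed.



End GenS.

Definition Dui {R : realType} {X Y : countType}
  (P : forall n : nat, n.-tuple X * n.-tuple Y -> R) (u : R) : \bar R :=
  ereal_sup [set \esum_(z in [set z : R | u <= `|z|]) (PZ P n z * (`|z|)%:E)%E
     | n in [set n : nat | (0 < n)%N]].

Section src.
Context {R : realType} {X Y : countType}
  (P : forall n : nat, n.-tuple X * n.-tuple Y -> R) (n : nat).
Hypothesis P0 : forall p, 0 <= @P n p.
Hypothesis P1 : (\esum_(p in [set: n.-tuple X * n.-tuple Y]) (@P n p)%:E = 1)%E.
Hypothesis PXpos : forall x : n.-tuple X, 0 < PX P x.
Hypothesis PYpos : forall y : n.-tuple Y, 0 < PY P y.

Local Open Scope ereal_scope.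

Lemma esumP_le1 (A : set (n.-tuple X * n.-tuple Y)) :
  \esum_(p in A) (@P n p)%:E <= 1.
Proof. by rewrite -P1; apply: esum_sub => // p _; rewrite lee_fin. Qed.

Lemma PXE x : (PX P x)%:E = \esum_(y in [set: n.-tuple Y]) (@P n (x, y))%:E.
Proof.
have E : \esum_(y in [set: n.-tuple Y]) (@P n (x, y))%:E =
   \esum_(p in (fun y => (x, y)) @` [set: n.-tuple Y]) (@P n p)%:E.
  by rewrite esum_image //= => y1 y2 _ _ [].
rewrite /PX fineK // E ge0_fin_numE ?(le_lt_trans (esumP_le1 _)) ?ltry //.
by apply: esum_ge0 => p _; rewrite lee_fin.
Qed.

Lemma PYE y : (PY P y)%:E = \esum_(x in [set: n.-tuple X]) (@P n (x, y))%:E.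
Proof.
have E : \esum_(x in [set: n.-tuple X]) (@P n (x, y))%:E =
   \esum_(p in (fun x => (x, y)) @` [set: n.-tuple X]) (@P n p)%:E.
  by rewrite esum_image //= => y1 y2 _ _ [].
rewrite /PY fineK // E ge0_fin_numE ?(le_lt_trans (esumP_le1 _)) ?ltry //.
by apply: esum_ge0 => p _; rewrite lee_fin.
Qed.

Lemma P_le_PY (x : n.-tuple X) (y : n.-tuple Y) : (@P n (x, y) <= PY P y)%R.
Proof.
rewrite -lee_fin PYE -(esum_set1 (a := fun x => (@P n (x, y))%:E)) ?lee_fin //.
by apply: esum_sub => // x' _; rewrite lee_fin.
Qed.

Lemma PXgY_ge0 (x : n.-tuple X) (y : n.-tuple Y) : (0 <= PXgY P x y)%R.
Proof. by rewrite /PXgY divr_ge0 // ltW. Qed.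

Lemma PXgY_le1 (x : n.-tuple X) (y : n.-tuple Y) : (PXgY P x y <= 1)%R.
Proof. by rewrite /PXgY ler_pdivrMr // mul1r P_le_PY. Qed.

Lemma L_ge0 (x : n.-tuple X) (y : n.-tuple Y) : (0 <= log2 (1 / PXgY P x y))%R.
Proof.
rewrite /log2 divr_ge0 //; last by rewrite ln_ge0 // ler1n.
have [q0|q0] := ltP 0%R (PXgY P x y).
  by rewrite ln_ge0 // ler_pdivlMr // mul1r PXgY_le1.
have -> : PXgY P x y = 0%R by apply/eqP; rewrite eq_le q0 PXgY_ge0.
by rewrite invr0 mulr0 ln0.
Qed.

Lemma Zfun_ge0 (p : n.-tuple X * n.-tuple Y) : (0 <= Zfun P p)%R.
Proof. by rewrite /Zfun mulr_ge0 // L_ge0. Qed.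

Lemma sumPX : \esum_(x in [set: n.-tuple X]) (PX P x)%:E = 1.
Proof.
rewrite -P1 esum_pair; last by move=> p; rewrite lee_fin.
by apply: eq_esum => x _; rewrite PXE.
Qed.

Lemma tailE (x : n.-tuple X) (A : set (n.-tuple Y)) :
  ((PX P x)%:E * (\esum_(y in A) (PYgX P y x)%:E) =
  \esum_(y in A) (@P n (x, y))%:E)%E.
Proof.
rewrite -esumZl ?ltW //; last by move=> y _; rewrite lee_fin divr_ge0 // ltW.
apply: eq_esum => y _; rewrite -EFinM /PYgX mulrC divfK //.
by rewrite gt_eqF.
Qed.


Lemma hbar_lb (eps : R) (x : n.-tuple X) (a : R) : (eps < 1)%R ->
  \esum_(y in [set y | (a < log2 (1 / PXgY P x y))%R]) (PYgX P y x)%:E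
     <= eps%:E -> (0 <= a)%R.
Proof.
move=> eps1 H; rewrite leNgt; apply/negP => a0.
have E : [set y | (a < log2 (1 / PXgY P x y))%R] = [set: n.-tuple Y].
  by apply/seteqP; split => // y _ /=; exact: lt_le_trans a0 (L_ge0 _ _).
move: H; rewrite E => H.
have : (PX P x)%:E * (\esum_(y in [set: n.-tuple Y]) (PYgX P y x)%:E) =
        (PX P x)%:E * 1 by rewrite tailE mule1 PXE.
move=> /(congr1 (fun z => ((PX P x)^-1)%:E * z)).
rewrite !muleA -EFinM mulVf ?gt_eqF // !mul1e => E1.
by move: H; rewrite E1 lee_fin leNgt eps1.
Qed.

Lemma hbar_ge0 (eps : R) (x : n.-tuple X) : (eps < 1)%R ->
  0 <= hbar_eps P eps x.
Proof.
move=> eps1; apply: le_ereal_inf_tmp => _ [a Ha <-].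
by rewrite lee_fin; exact: hbar_lb Ha.
Qed.

Lemma hbar_le (eps : R) (x : n.-tuple X) (a : R) :
  \esum_(y in [set y | (a < log2 (1 / PXgY P x y))%R]) (PYgX P y x)%:E
     <= eps%:E -> hbar_eps P eps x <= a%:E.
Proof. by move=> H; apply: ereal_inf_lbound; exists a. Qed.

Lemma bridge (u : R) :
  \esum_(p in [set p | (u <= `|Zfun P p|)%R]) (@P n p * `|Zfun P p|)%:E =
  \esum_(z in [set z : R | (u <= `|z|)%R]) (PZ P n z * (`|z|)%:E).
Proof.
transitivity (\esum_(z in [set z : R | (u <= `|z|)%R])
   \esum_(p in [set p | Zfun P p = z]) (@P n p * `|z|)%:E); last first.
  apply: eq_esum => z _; rewrite /PZ muleC -esumZl //; last first.
    by move=> p _; rewrite lee_fin.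
  by apply: eq_esum => p _; rewrite -EFinM mulrC.
rewrite (esum_esum (a := fun z p => (@P n p * `|z|)%:E)); last first.
  by move=> z p _ _; rewrite lee_fin mulr_ge0.
set D := _ `*`` _.
have -> : [set p | (u <= `|Zfun P p|)%R] = snd @` D.
  apply/seteqP; split.
    by move=> p /= Hp; exists (Zfun P p, p).
  by move=> _ [[z p] [Hz Hp] <-] /=; move: Hz Hp => /= Hz ->.
rewrite esum_image; last first.
  move=> [z1 p1] [z2 p2]; rewrite !inE /D /=. move=> [_ H1] [_ H2] E.
  by rewrite -H1 -H2 E.
by apply: eq_esum => -[z p] [/= _ <-].
Qed.


Lemma UI (u : R) (B : set (n.-tuple X * n.-tuple Y)) : (0 < n)%N -> (0 <= u)%R ->
  \esum_(p in B) (@P n p * Zfun P p)%:E <=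
  u%:E * (\esum_(p in B) (@P n p)%:E) + Dui P u.
Proof.
move=> n0 u0.
pose g p := (if (u <= `|Zfun P p|)%R then @P n p * `|Zfun P p| else 0)%R.
have g0 p : (0 <= g p)%R by rewrite /g; case: ifP => // _; rewrite mulr_ge0.
apply: (@le_trans _ _ (\esum_(p in B) ((u * @P n p)%:E + (g p)%:E))).
  apply: le_esum => p _; rewrite -EFinD lee_fin /g.
  have Z0 := Zfun_ge0 p; case: ifP => H.
    by rewrite ger0_norm // lerDr mulr_ge0.
  rewrite addr0 mulrC ler_wpM2r //; apply: ltW.
  by move/negbT: H; rewrite -ltNge ger0_norm.
rewrite esumD; last 2 first.
- by move=> p _; rewrite lee_fin mulr_ge0.
- by move=> p _; rewrite lee_fin.
rewrite (eq_esum (b := fun p => u%:E * (@P n p)%:E)); last by move=> p _; rewrite EFinM.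
rewrite esumZl //; last by move=> p _; rewrite lee_fin.
apply: leeD => //.
apply: (@le_trans _ _ (\esum_(p in [set: n.-tuple X * n.-tuple Y]) (g p)%:E)).
  by apply: esum_sub => // p _; rewrite lee_fin.
apply: (@le_trans _ _ (\esum_(z in [set z : R | (u <= `|z|)%R]) (PZ P n z * (`|z|)%:E))); last first.
  by apply: ereal_sup_ubound; exists n.
rewrite -bridge [X in _ <= X]esum_mkcond; apply: le_esum => p _.
rewrite /g; case: (boolP (u <= `|Zfun P p|)%R) => H.
  by rewrite mem_set.
by rewrite memNset //= => H'; rewrite H' in H.
Qed.


Definition Gx (x : n.-tuple X) : \bar R :=
  \esum_(y in [set: n.-tuple Y]) (@P n (x, y) * log2 (1 / PXgY P x y))%:E.

Lemma Gx_ge0 x : 0 <= Gx x.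
Proof. by apply: esum_ge0 => y _; rewrite lee_fin mulr_ge0 // L_ge0. Qed.

Lemma markov (eps : R) (x : n.-tuple X) : (0 < eps)%R ->
  (PX P x)%:E * hbar_eps P eps x <= (eps^-1)%:E * Gx x.
Proof.
move=> eps0; have G0 := Gx_ge0 x.
case Hg: (Gx x) => [g| |]; last by rewrite Hg in G0.
  2: by rewrite gt0_muley ?leey // lte_fin invr_gt0.
have g0 : (0 <= g)%R by rewrite -lee_fin -Hg.
have PX0 := PXpos x.
apply/lee_addgt0Pr => gam gam0.
set c := (g / eps + gam)%R.
have c0 : (0 < c)%R by rewrite /c ltr_wpDl // divr_ge0 // ltW.
set t := (c / PX P x)%R.
have Ht : \esum_(y in [set y | (t < log2 (1 / PXgY P x y))%R]) (PYgX P y x)%:E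
     <= eps%:E.
  set tl := \esum_(y in _) _.
  have H1 : c%:E * tl <= g%:E.
    have -> : c = (t * PX P x)%R by rewrite /t divfK // gt_eqF.
    rewrite EFinM -muleA tailE -esumZl; last 2 first.
    - by rewrite divr_ge0 // ltW.
    - by move=> y _; rewrite lee_fin.
    rewrite -Hg /Gx; apply: (@le_trans _ _ (\esum_(y in [set y | (t < log2 (1 / PXgY P x y))%R])
        (@P n (x, y) * log2 (1 / PXgY P x y))%:E)).
      apply: le_esum => y /= Hy; rewrite -EFinM lee_fin mulrC.
      by rewrite ler_wpM2l // ltW.
    by apply: esum_sub => // y _; rewrite lee_fin mulr_ge0 // L_ge0.
  have : tl <= (c^-1)%:E * g%:E by rewrite lee_pdivlMl.
  move=> /le_trans; apply; rewrite -EFinM lee_fin ler_pdivrMl //.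
  by rewrite /c mulrDl divfK ?gt_eqF // lerDl mulr_ge0 // ltW.
apply: (@le_trans _ _ ((PX P x)%:E * t%:E)).
  by apply: lee_wpmul2l; [rewrite lee_fin ltW|exact: hbar_le].
by rewrite -!EFinM -EFinD lee_fin /t mulrC divfK ?gt_eqF // /c mulrC.
Qed.


Lemma Dui_ge0 (u : R) : (0 < n)%N -> 0 <= Dui P u.
Proof.
move=> n0; apply: (@le_trans _ _ (\esum_(z in [set z : R | (u <= `|z|)%R])
   (PZ P n z * (`|z|)%:E))); last by apply: ereal_sup_ubound; exists n.
apply: esum_ge0 => z _; rewrite mule_ge0 // /PZ.
by apply: esum_ge0 => p _; rewrite lee_fin.
Qed.

Lemma part2_n (eps a u : R) : (0 < n)%N -> (0 < eps)%R -> (eps < 1)%R ->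
  (0 <= a)%R -> (0 <= u)%R ->
  (n%:R^-1)%:E * Hs_eps P n eps <= a%:E + (eps^-1)%:E * ((u / eps)%:E *
     (\esum_(p in [set p | (a < Zfun P p)%R]) (@P n p)%:E) + Dui P u).
Proof.
move=> n0 eps0 eps1 a0 u0.
set Q := \esum_(p in _) _.
set na := (n%:R * a)%R.
have n0' : (0 < n%:R :> R)%R by rewrite ltr0n.
have na0 : (0 <= na)%R by rewrite mulr_ge0 // ltW.
pose tl (x : n.-tuple X) := \esum_(y in [set y | (na < log2 (1 / PXgY P x y))%R]) (PYgX P y x)%:E.
pose good (x : n.-tuple X) := tl x <= eps%:E.
have HA : Hs_eps P n eps <= na%:E + (eps^-1)%:E *
    \esum_(x in [set: n.-tuple X]) (if good x then 0 else Gx x).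
  rewrite /Hs_eps.
  apply: (@le_trans _ _ (\esum_(x in [set: n.-tuple X])
     ((if good x then (PX P x * na)%R else 0%R)%:E +
      (eps^-1)%:E * (if good x then 0 else Gx x)))).
    apply: le_esum => x _; rewrite /good; case: ifPn => Hg.
      rewrite mule0 adde0 EFinM; apply: lee_wpmul2l.
        by rewrite lee_fin ltW.
      exact: hbar_le.
    by rewrite add0e; apply: markov.
  rewrite esumD; last 2 first.
  - by move=> x _; case: ifP => // _; rewrite lee_fin mulr_ge0 // ltW.
  - move=> x _; apply: mule_ge0; first by rewrite lee_fin invr_ge0 ltW.
    by case: ifP => // _; exact: Gx_ge0.
  apply: leeD.
    apply: (@le_trans _ _ (\esum_(x in [set: n.-tuple X]) (na%:E * (PX P x)%:E))).
      apply: le_esum => x _; case: ifP => _; rewrite -EFinM lee_fin.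
        by rewrite mulrC.
      by rewrite mulr_ge0 // ltW.
    rewrite esumZl // ?sumPX ?mule1 //.
    by move=> x _; rewrite lee_fin ltW.
  rewrite esumZl // ?invr_ge0 ?ltW //.
  by move=> x _; case: ifP => // _; exact: Gx_ge0.
set Bp := [set p : n.-tuple X * n.-tuple Y | ~~ good p.1].
have HB : \esum_(x in [set: n.-tuple X]) (if good x then 0 else Gx x) =
    (n%:R)%:E * \esum_(p in Bp) (@P n p * Zfun P p)%:E.
  rewrite -esumZl ?ler0n //; last by move=> p _; rewrite lee_fin mulr_ge0 // Zfun_ge0.
  rewrite esum_split_set; last first.
    by move=> p; rewrite -EFinM lee_fin mulr_ge0 ?ler0n // mulr_ge0 // Zfun_ge0.
  apply: eq_esum => x _ /=; rewrite esum_cond; case: ifPn => //= _.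
  apply: eq_esum => y _; rewrite -EFinM /Zfun /=; congr EFin.
  by rewrite [RHS]mulrCA mulVKf // gt_eqF.
have HQ : Q = \esum_(x in [set: n.-tuple X])
    \esum_(y in [set y | (na < log2 (1 / PXgY P x y))%R]) (@P n (x, y))%:E.
  rewrite /Q esum_split_set; last by move=> p; rewrite lee_fin.
  apply: eq_esum => x _; congr esum; apply/seteqP; split => y /=.
    by rewrite /Zfun /na ltr_pdivlMl.
  by rewrite /Zfun /na ltr_pdivlMl.
have HC : \esum_(p in Bp) (@P n p)%:E <= (eps^-1)%:E * Q.
  rewrite esum_split_set; last by move=> p; rewrite lee_fin.
  rewrite HQ -esumZl; last 2 first.
  - by rewrite invr_ge0 ltW.
  - by move=> x _; apply: esum_ge0 => y _; rewrite lee_fin.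
  apply: le_esum => x _ /=; rewrite esum_cond; case: ifPn => Hg; last first.
    apply: mule_ge0; first by rewrite lee_fin invr_ge0 ltW.
    by apply: esum_ge0 => y _; rewrite lee_fin.
  rewrite -PXE -tailE muleCA -[X in X <= _](mule1 (PX P x)%:E).
  apply: lee_wpmul2l; first by rewrite lee_fin ltW.
  rewrite lee_pdivlMl // mule1; apply: ltW.
  by move: Hg; rewrite /good /tl -ltNge.
have D0 := Dui_ge0 u n0.
have Q0 : 0 <= Q by apply: esum_ge0 => p _; rewrite lee_fin.
have W0 : 0 <= (u / eps)%:E * Q + Dui P u.
  by rewrite adde_ge0 // mule_ge0 // lee_fin divr_ge0 // ltW.
have HS : Hs_eps P n eps <= na%:E + (eps^-1)%:E * ((n%:R)%:E *
     ((u / eps)%:E * Q + Dui P u)).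
  apply: (le_trans HA); apply: leeD2l; rewrite HB.
  apply: lee_wpmul2l; first by rewrite lee_fin invr_ge0 ltW.
  apply: lee_wpmul2l; first by rewrite lee_fin ler0n.
  apply: (le_trans (UI _ n0 u0)); apply: leeD2r.
  rewrite EFinM -muleA; apply: lee_wpmul2l; first by rewrite lee_fin.
  exact: HC.
apply: (@le_trans _ _ ((n%:R^-1)%:E * (na%:E + (eps^-1)%:E * ((n%:R)%:E *
     ((u / eps)%:E * Q + Dui P u))))).
  by apply: lee_wpmul2l => //; rewrite lee_fin invr_ge0 ler0n.
rewrite ge0_muleDr ?lee_fin //; last first.
  apply: mule_ge0; first by rewrite lee_fin invr_ge0 ltW.
  by apply: mule_ge0; rewrite // lee_fin.
rewrite -EFinM /na mulKf ?gt_eqF //; apply: leeD2l.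
rewrite [X in X <= _]muleCA (muleA (n%:R^-1)%:E) -EFinM mulVf ?gt_eqF //.
by rewrite mul1e.
Qed.


Lemma part1_n (eps u gam : R) : (0 < n)%N -> (0 < eps)%R -> (eps < 1)%R ->
  (0 <= u)%R -> (0 < gam)%R ->
  (n%:R^-1)%:E * condH P n <=
  (n%:R^-1)%:E * Hs_eps P n eps + (u * eps + gam)%:E + Dui P u.
Proof.
move=> n0 eps0 eps1 u0 gam0.
have n0' : (0 < n%:R :> R)%R by rewrite ltr0n.
have D0 := Dui_ge0 u n0.
have Hs0 : 0 <= Hs_eps P n eps.
  apply: esum_ge0 => x _; apply: mule_ge0; first by rewrite lee_fin ltW.
  exact: hbar_ge0.
case: (pselect (exists x : n.-tuple X, hbar_eps P eps x = +oo)) => [[x0 Hx0]|Hfin].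
  have -> : Hs_eps P n eps = +oo.
    apply/eqP; rewrite eq_le leey /=.
    have PXx : 0 < (PX P x0)%:E by rewrite lte_fin.
    rewrite -(gt0_muley PXx) -Hx0.
    rewrite -(esum_set1 (a := fun x => (PX P x)%:E * hbar_eps P eps x)); last first.
      by apply: mule_ge0; [rewrite lee_fin ltW|exact: hbar_ge0].
    apply: esum_sub => // x _; apply: mule_ge0; first by rewrite lee_fin ltW.
    exact: hbar_ge0.
  rewrite gt0_muley ?lte_fin ?invr_gt0 // addye ?leey //.
  by rewrite -ltNye (lt_le_trans ltNy0 D0).
set del := (n%:R * gam)%R.
have del0 : (0 < del)%R by rewrite mulr_gt0.
have Hex : forall x : n.-tuple X, exists a : R,
    (\esum_(y in [set y | (a < log2 (1 / PXgY P x y))%R]) (PYgX P y x)%:E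
      <= eps%:E) /\ a%:E < hbar_eps P eps x + del%:E.
  move=> x; have hx0 := hbar_ge0 x eps1.
  have hfin : hbar_eps P eps x \is a fin_num.
    rewrite ge0_fin_numE // ltey; apply/negP => /eqP Hx.
    by apply: Hfin; exists x.
  have : hbar_eps P eps x < hbar_eps P eps x + del%:E by rewrite lteDl // lte_fin.
  by move=> /ereal_inf_lt [_ [a Ha <-] Hlt]; exists a.
have /choice [ax Hax] := Hex.
have ax0 x : (0 <= ax x)%R := hbar_lb eps1 (Hax x).1.
pose Lf (x : n.-tuple X) (y : n.-tuple Y) := log2 (1 / PXgY P x y).
pose A := [set p : n.-tuple X * n.-tuple Y | (ax p.1 < Lf p.1 p.2)%R].
have HG : forall x, Gx x <= (PX P x * ax x)%:E +
    \esum_(y in [set y | (ax x < Lf x y)%R]) (@P n (x, y) * Lf x y)%:E.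
  move=> x; rewrite /Gx [X in _ <= _ + X]esum_mkcond.
  rewrite mulrC EFinM PXE -esumZl //; last by move=> y _; rewrite lee_fin.
  rewrite -esumD; last 2 first.
  - by move=> y _; rewrite lee_fin mulr_ge0.
  - by move=> y _; case: ifP => // _; rewrite lee_fin mulr_ge0 // L_ge0.
  apply: le_esum => y _; rewrite -EFinM.
  case: (boolP (ax x < Lf x y)%R) => H.
    rewrite mem_set // -EFinD lee_fin lerDr mulr_ge0 //.
  rewrite memNset //=; last by move=> H'; rewrite H' in H.
  rewrite adde0 lee_fin mulrC ler_wpM2r //; rewrite -leNgt in H; exact: H.
have HPA : \esum_(p in A) (@P n p)%:E <= eps%:E.
  rewrite esum_split_set; last by move=> p; rewrite lee_fin.
  apply: (@le_trans _ _ (\esum_(x in [set: n.-tuple X]) (eps%:E * (PX P x)%:E))).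
    apply: le_esum => x _ /=; rewrite -tailE [X in _ <= X]muleC.
    by apply: lee_wpmul2l; [rewrite lee_fin ltW|exact: (Hax x).1].
  rewrite esumZl; [by rewrite sumPX mule1|exact: ltW|].
  by move=> x _; rewrite lee_fin ltW.
have HLA : \esum_(p in A) (@P n p * Lf p.1 p.2)%:E <=
    (n%:R)%:E * ((u * eps)%:E + Dui P u).
  have -> : \esum_(p in A) (@P n p * Lf p.1 p.2)%:E =
      (n%:R)%:E * \esum_(p in A) (@P n p * Zfun P p)%:E.
    rewrite -esumZl ?ler0n //; last by move=> p _; rewrite lee_fin mulr_ge0 // Zfun_ge0.
    apply: eq_esum => p _; rewrite -EFinM /Zfun; congr EFin.
    by rewrite [RHS]mulrCA mulVKf // gt_eqF.
  apply: lee_wpmul2l; first by rewrite lee_fin ler0n.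
  apply: (le_trans (UI _ n0 u0)); apply: leeD2r.
  by rewrite EFinM; apply: lee_wpmul2l; rewrite ?lee_fin.
have HT1 : \esum_(x in [set: n.-tuple X]) (PX P x * ax x)%:E <=
    Hs_eps P n eps + del%:E.
  apply: (@le_trans _ _ (\esum_(x in [set: n.-tuple X])
      ((PX P x)%:E * hbar_eps P eps x + del%:E * (PX P x)%:E))).
    apply: le_esum => x _; rewrite muleC -ge0_muleDl ?hbar_ge0 ?lee_fin //; last first.
      exact: ltW.
    rewrite EFinM [X in _ <= X]muleC; apply: lee_wpmul2l; first by rewrite lee_fin ltW.
    exact: ltW (Hax x).2.
  rewrite esumD; last 2 first.
  - by move=> x _; apply: mule_ge0; [rewrite lee_fin ltW|exact: hbar_ge0].
  - by move=> x _; rewrite -EFinM lee_fin mulr_ge0 // ltW.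
  rewrite esumZl; [by rewrite sumPX mule1|exact: ltW|].
  by move=> x _; rewrite lee_fin ltW.
have HcG : condH P n = \esum_(x in [set: n.-tuple X]) Gx x.
  by rewrite /condH esum_pair // => p; rewrite lee_fin mulr_ge0 // L_ge0.
have H1 : condH P n <= (Hs_eps P n eps + del%:E) +
    (n%:R)%:E * ((u * eps)%:E + Dui P u).
  rewrite HcG; apply: (@le_trans _ _ (\esum_(x in [set: n.-tuple X])
     ((PX P x * ax x)%:E + \esum_(y in [set y | (ax x < Lf x y)%R])
        (@P n (x, y) * Lf x y)%:E))).
    by apply: le_esum => x _; exact: HG.
  rewrite esumD; last 2 first.
  - by move=> x _; rewrite lee_fin mulr_ge0 // ltW.
  - by move=> x _; apply: esum_ge0 => y _; rewrite lee_fin mulr_ge0 // L_ge0.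
  apply: leeD => //; apply: le_trans HLA.
  by rewrite esum_split_set //; last by move=> p; rewrite lee_fin mulr_ge0 // L_ge0.
have ninv0 : (0 <= n%:R^-1 :> R)%R by rewrite invr_ge0 ler0n.
apply: (@le_trans _ _ ((n%:R^-1)%:E * ((Hs_eps P n eps + del%:E) +
    (n%:R)%:E * ((u * eps)%:E + Dui P u)))).
  by apply: lee_wpmul2l; [rewrite lee_fin|exact: H1].
rewrite ge0_muleDr; last 2 first.
- by rewrite adde_ge0 // lee_fin ltW.
- by apply: mule_ge0; rewrite ?lee_fin // adde_ge0 // lee_fin mulr_ge0 // ltW.
rewrite ge0_muleDr //; last by rewrite lee_fin ltW.
rewrite muleA -!EFinM mulVf ?gt_eqF // mul1e /del mulKf ?gt_eqF //.
rewrite EFinD -!addeA; apply: leeD2l.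
by rewrite addeCA.
Qed.

End src.


Unset Implicit Arguments.
Section main.
Context {R : realType} {X Y : countType}
  (P : forall n : nat, n.-tuple X * n.-tuple Y -> R).
Local Open Scope ereal_scope.

Lemma limn_esup_ge0 (u : nat -> \bar R) : (forall n, 0 <= u n) -> 0 <= limn_esup u.
Proof.
move=> u0; apply: le_ereal_inf_tmp => _ [V [N _ HN] <-].
apply: (le_trans (u0 N)); apply: ereal_sup_ubound; exists N => //.
by apply: HN => /=.
Qed.

Lemma limn_esup_mono (u v : nat -> \bar R) : (forall n, u n <= v n) ->
  limn_esup u <= limn_esup v.
Proof.
move=> uv; apply: le_ereal_inf_tmp => _ [V FV <-].
apply: (le_trans (ereal_inf_lbound _)); first by exists V.
apply: ge_ereal_sup => _ [n Vn <-]; apply: le_trans (uv n) _.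
by apply: ereal_sup_ubound; exists n.
Qed.

Lemma ex_Dui (g : R) : uniformly_integrable P -> (0 < g)%R ->
  exists u : R, (0 <= u)%R /\ Dui P u < g%:E.
Proof.
move=> HUI g0.
have : \forall u \near +oo%R, Dui P u < g%:E.
  move: HUI; rewrite /uniformly_integrable => /(_ [set x | x < g%:E]).
  by apply; apply: open_ereal_lt'; rewrite lte_fin.
move=> [M [_ HM]].
exists (Num.max M 0 + 1)%R; split; first by rewrite addr_ge0 // le_max lexx orbT.
by apply: HM; rewrite ltr_pwDr // le_max lexx.
Qed.


Definition fe (eps : R) :=
  limn_esup (fun n => (n%:R^-1)%:E * Hs_eps P n eps).

Hypothesis P0 : forall n p, (0 <= @P n p)%R.

Lemma PX_ge0 n (x : n.-tuple X) : (0 <= PX P x)%R.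
Proof. by rewrite /PX fine_ge0 // esum_ge0 // => y _; rewrite lee_fin. Qed.

Lemma hbar_anti n (x : n.-tuple X) (e1 e2 : R) : (e1 <= e2)%R ->
  hbar_eps P e2 x <= hbar_eps P e1 x.
Proof.
move=> e12; apply: le_ereal_inf_tmp => _ [a Ha <-].
by apply: ereal_inf_lbound; exists a => //; apply: le_trans Ha _; rewrite lee_fin.
Qed.

Lemma fe_anti (e1 e2 : R) : (e1 <= e2)%R -> fe e2 <= fe e1.
Proof.
move=> e12; apply: limn_esup_mono => n; apply: lee_wpmul2l.
  by rewrite lee_fin invr_ge0 ler0n.
apply: le_esum => x _; apply: lee_wpmul2l; first by rewrite lee_fin PX_ge0.
exact: hbar_anti.
Qed.

Lemma HsE : Hs P = ereal_sup (fe @` [set` Interval (BRight 0%R) (BLeft 1%R)]).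
Proof.
have H01 : (BRight (0%R : R) < BLeft (1%R : R))%O by rewrite bnd_simp.
have Hm : {in Interval (BRight 0%R) (BLeft 1%R) &, nonincreasing_fun fe}.
  by move=> e1 e2 _ _ /fe_anti.
have := @nonincreasing_at_right_cvge R fe _ _ H01 Hm.
move=> /cvg_lim; rewrite /Hs /fe => <- //.
Qed.

End main.


End Aux.
Import Aux.

Theorem theorem8 (R : realType) (X Y : countType)
  (P : forall n : nat, n.-tuple X * n.-tuple Y -> R) :
  is_source P -> marginals_positive P -> uniformly_integrable P ->
  (limn_esup (fun n => (n%:R^-1)%:E * condH P n)%E <= Hs P)%E /\
  (Hs P <= Hbar P)%E.
Proof.
move=> HS HM HUI.
have P0 n p : 0 <= P n p := (HS n).1 p.
have P1 n := (HS n).2.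
have PXp n := (HM n).1.
have PYp n := (HM n).2.
have Hn0 : \forall n \near \oo, (0 < n)%N by exists 1%N.
rewrite (HsE P P0).
set I01 := [set` Interval (BRight (0%R : R)) (BLeft (1%R : R))].
have I01P e : I01 e <-> 0 < e < 1 by rewrite /I01 /= in_itv.
split.
- set s := ereal_sup _.
  have h2 : I01 (1/2) by apply/I01P; lra.
  have s0 : (0 <= s)%E.
    apply: le_trans (ereal_sup_ubound (ex_intro2 _ _ _ h2 erefl)).
    apply: limn_esup_ge0 => n; apply: mule_ge0; first by rewrite lee_fin invr_ge0.
    apply: esum_ge0 => x _; apply: mule_ge0; first by rewrite lee_fin ltW.
    by apply: (hbar_ge0 (P0 n) (P1 n) (PXp n) (PYp n)); lra.
  case Hs: s => [s'| |]; last by rewrite Hs in s0.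
    2: by rewrite leey.
  rewrite -Hs; apply/lee_addgt0Pr => gam gam0.
  set g := gam / 4.
  have g0 : 0 < g by rewrite /g; lra.
  have [u [u0 Du]] := ex_Dui P g HUI g0.
  set eps := Num.min (1/2) (g / (u + 1)).
  have u10 : 0 < u + 1 by lra.
  have eps0 : 0 < eps.
    by rewrite /eps lt_min; apply/andP; split; [lra|exact: divr_gt0].
  have eps1 : eps < 1 by rewrite /eps gt_min; apply/orP; left; lra.
  have ueps : u * eps <= g.
    apply: (@le_trans _ _ ((u + 1) * eps)); first by apply: ler_wpM2r; lra.
    by rewrite -ler_pdivlMl // mulrC /eps ge_min lexx orbT.
  have Hf : (fe P eps < s + g%:E)%E.
    apply: le_lt_trans (_ : s < s + g%:E)%E; last by rewrite Hs lteDl // lte_fin.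
    by apply: ereal_sup_ubound; exists eps => //; apply/I01P; rewrite eps0.
  apply: limn_esup_le; apply: filterS2 (limn_esup_lt Hf) Hn0 => n H1 n0.
  apply: le_trans (part1_n (P0 n) (P1 n) (PXp n) (PYp n) n0 eps0 eps1 u0 g0) _.
  have -> : (s + gam%:E = (s + g%:E) + (g + g)%:E + g%:E)%E.
    by rewrite -!addeA -!EFinD /g; congr (_ + _%:E); lra.
  apply: leeD; last exact: ltW.
  by apply: leeD; [exact: ltW|rewrite lee_fin; lra].
- apply: ge_ereal_sup => _ [eps /I01P /andP[eps0 eps1] <-].
  apply: le_ereal_inf_tmp => _ [a Ha <-].
  pose Q n := (\esum_(p in [set p | (a < Zfun P p)%R]) (@P n p)%:E)%E.
  have HQ c : 0 < c -> \forall n \near \oo, (Q n < c%:E)%E.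
    move=> c0; move: Ha => /(_ [set x | (x < c%:E)%E]); apply.
    by apply: open_ereal_lt'; rewrite lte_fin.
  have a0 : 0 <= a.
    rewrite leNgt; apply/negP => an.
    have [N _ HN] := HQ (1/2) ltac:(lra).
    have := HN N (leqnn N); rewrite /Q.
    have -> : [set p | (a < Zfun P p)%R] = [set: N.-tuple X * N.-tuple Y].
      apply/seteqP; split => // p _ /=.
      exact: lt_le_trans an (Zfun_ge0 (P0 N) (P1 N) (PYp N) p).
    by rewrite P1 lte_fin; lra.
  apply/lee_addgt0Pr => gam gam0.
  have ge0 : 0 < gam * eps / 2 by rewrite divr_gt0 ?mulr_gt0.
  have [u [u0 Du]] := ex_Dui P (gam * eps / 2) HUI ge0.
  have u10 : 0 < u + 1 by lra.
  set c := gam * eps * eps / (2 * (u + 1)).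
  have c0 : 0 < c by rewrite /c divr_gt0 ?mulr_gt0 //; lra.
  apply: limn_esup_le; apply: filterS2 (HQ c c0) Hn0 => n Qn n0.
  apply: le_trans (part2_n (P0 n) (P1 n) (PXp n) (PYp n) n0 eps0 eps1 a0 u0) _.
  rewrite leeD2l //.
  apply: (@le_trans _ _ ((eps^-1)%:E * ((u / eps * c)%:E + (gam * eps / 2)%:E)))%E.
    apply: lee_wpmul2l; first by rewrite lee_fin invr_ge0 ltW.
    apply: leeD; last exact: ltW.
    rewrite (EFinM (u / eps) c); apply: lee_wpmul2l; [by rewrite lee_fin divr_ge0 // ltW|exact: ltW].
  rewrite -EFinD -EFinM lee_fin.
  have Hk : u / eps * c = (u / (u + 1)) * (gam * eps / 2).
    rewrite /c; field; rewrite !gt_eqF //.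
  have Hk1 : u / (u + 1) <= 1 by rewrite ler_pdivrMr // mul1r; lra.
  rewrite Hk ler_pdivrMl //.
  have h0 : 0 <= gam * eps / 2 by rewrite divr_ge0 // mulr_ge0 // ltW.
  apply: (@le_trans _ _ (1 * (gam * eps / 2) + gam * eps / 2)).
    by rewrite lerD2r; apply: ler_wpM2r.
  have -> : 1 * (gam * eps / 2) + gam * eps / 2 = eps * gam.
    by field.
  by [].
Qed.
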